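(* Let $0\le r\le n$, let $f$ be an $r$-truncated subexceedant function on $[n-r]$, choose an admissible placement of block-ends, and let $A\in\mathcal{A}_{n+1,r+1}$ be the resulting assemblée produced by the insertion algorithm described below. Let $w_\alpha=\#\{i\in[n-r]: f(i)=i+r+1\}$ (the number of inserted elements given weight $\alpha^{-1}$) and $w_\beta=\#\{i\in[n-r]: f(i)=1\}$ (the number of inserted elements given weight $\beta^{-1}$). Then $|\mathrm{lrs}(\rho(A))|=w_\alpha$ and $|\mathrm{rls}(\rho(A))|=w_\beta$.
   Context: An assemblée of size $(m,s)$ is a collection of $s$ nonempty, pairwise disjoint, linearly ordered sets (blocks) whose union is $\{1,\dots,m\}$; the last element of a block is its block-end. Blocks are listed in the canonical order in which block-ends decrease from left to right, and the assemblée is identified with the word obtained by concatenating its blocks (''left/right in $A$'' refers to this word). $\mathcal{A}_{m,s}$ is the set of assemblées of size $(m,s)$. For $A\in\mathcal{A}_{n+1,r+1}$ with block-ends $b_1>\dots>b_{r+1}$: $\mathrm{lrs}(A)$ is the set of elements $x>b_1$ of $A$ larger than every element $y>b_1$ to the right of $x$ in $A$; $\mathrm{rls}(A)$ is the set of elements $x<b_{r+1}$ of $A$ larger than every element $y<b_{r+1}$ to the left of $x$ in $A$. An $r$-truncated subexceedant function on $[n-r]=\{1,\dots,n-r\}$ is a function $f:[n-r]\to\mathbb{Z}_{>0}$ with $f(i)\le i+r+1$ for all $i$. Insertion algorithm. Start with $r+1$ ''green'' markers $g_1,\dots,g_{r+1}$ arranged vertically (in a linear ''height'' order, $g_1$ on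 top). For $i=1,\dots,n-r$ insert a new element $x_i$, placed horizontally to the right of $x_{i-1}$, into the current height order (which contains the $r+1$ green markers and $x_1,\dots,x_{i-1}$, i.e. $i+r$ items) at position $f(i)$ counted from the bottom: $f(i)=1$ means below all current items, $f(i)=k$ means directly above the $(k-1)$-st item from the bottom (so $f(i)=i+r+1$ means above all current items). At the end, every one of the $n+1$ items receives as value its rank in the height order (from $1$ at the bottom to $n+1$ at the top); write $x_i$ also for the value of $x_i$ and $b_1>\dots>b_{r+1}$ for the values of $g_1,\dots,g_{r+1}$. An admissible placement of block-ends is a way of merging the sequence $x_1,\dots,x_{n-r}$ with the sequence $b_1,\dots,b_{r+1}$ (keeping both orders) such that $b_{r+1}$ is the last letter; there are $\binom{n}{r}$ of them. Cutting the merged word after each $b_i$ gives an assemblée $A\in\mathcal{A}_{n+1,r+1}$ with block-ends $b_1,\dots,b_{r+1}$. The inserted element $x_i$ is given weight $\beta^{-1}$ if $f(i)=1$, weight $\alpha^{-1}$ if $f(i)=i+r+1$, and weight $1$ otherwise. The map $\rho$. For $A\in\mathcal{A}_{n+1,r+1}$ with block-ends $b_1>\dots>b_{r+1}$, let $[a_1,\dots,a_u]$ be the elements of $A$ greater than $b_1$, listed in their order of appearance in $A$ from left to right, and $[c_1,\dots,c_w]$ the elements smaller than $b_{r+1}$, in their order of appearance. $\rho(A)$ is the word obtained from $A$ by replacing $a_i$ (in its position) by $a_{u-i+1}$ for each $i$, replacing $c_i$ by $b_{r+1}-c_i$ for each $i$, and leaving all other entries unchanged; it is again an assemblée in $\mathcal{A}_{n+1,r+1}$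 with the same block-ends. *)

(* Defs.v *)
From mathcomp Require Import all_boot.
Set Implicit Arguments. Unset Strict Implicit. Unset Printing Implicit Defensive.

(** An assemblée is represented by the list of its blocks (each block a
    linearly ordered list of elements of {1..m}), in canonical order. *)
Definition assemblee := seq (seq nat).

Definition aword (A : assemblee) : seq nat := flatten A.

Definition block_ends (A : assemblee) : seq nat := [seq last 0 B | B <- A].
(** b_1 = largest block-end, b_{r+1} = smallest block-end *)
Definition bfirst (A : assemblee) : nat := foldr maxn 0 (block_ends A).
Definition blast (A : assemblee) : nat := foldr minn (bfirst A) (block_ends A).

Definition lrs (A : assemblee) : seq nat :=
  let w := aword A in let b1 := bfirst A in
  [seq nth 0 w i | i <- iota 0 (size w) &
     (b1 < nth 0 w i) &&
     all (fun y => (b1 < y) ==> (y < nth 0 w i)) (drop i.+1 w)].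

Definition rls (A : assemblee) : seq nat :=
  let w := aword A in let br := blast A in
  [seq nth 0 w i | i <- iota 0 (size w) &
     (nth 0 w i < br) &&
     all (fun y => (y < br) ==> (y < nth 0 w i)) (take i w)].

Fixpoint fill (P : pred nat) (s : seq nat) (w : seq nat) : seq nat :=
  match w with
  | [::] => [::]
  | x :: w' => if P x then head 0 s :: fill P (behead s) w' else x :: fill P s w'
  end.

Definition rho_word (w : seq nat) (b1 br : nat) : seq nat :=
  let a := [seq x <- w | b1 < x] in
  [seq (if x < br then br - x else x) | x <- fill (fun x => b1 < x) (rev a) w].

Definition rho (A : assemblee) : assemblee :=
  reshape (shape A) (rho_word (aword A) (bfirst A) (blast A)).

(** items of the height order: inl k = green marker g_k, inr i = inserted x_i *)
Definition item := (nat + nat)%type.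

Definition insert_at (s : seq item) (k : nat) (x : item) : seq item :=
  take k s ++ x :: drop k s.

(** height order, listed from bottom to top; x_i is inserted at position f(i)
    counted from the bottom (i.e. with f(i)-1 items below it) *)
Definition height_order (n r : nat) (f : nat -> nat) : seq item :=
  foldl (fun s i => insert_at s (f i).-1 (inr i))
        [seq inl k | k <- rev (iota 1 r.+1)] (iota 1 (n - r)).

(** value of an item = its rank in the final height order (1 at the bottom) *)
Definition ivalue (n r : nat) (f : nat -> nat) (it : item) : nat :=
  (index it (height_order n r f)).+1.

(** An admissible placement of block-ends is encoded by a boolean word p of
    length n+1: true = next block-end b_k, false = next inserted x_i; it has
    r+1 trues and its last letter is true (b_{r+1} is last). *)
Definition admissible (n r : nat) (p : seq bool) : bool :=
  [&& size p == n.+1, count id p == r.+1 & last false p].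

Fixpoint merge_word (p : seq bool) (i k : nat) : seq item :=
  match p with
  | [::] => [::]
  | true :: p' => inl k :: merge_word p' i k.+1
  | false :: p' => inr i :: merge_word p' i.+1 k
  end.

Definition is_green (it : item) : bool := if it is inl _ then true else false.

Fixpoint cut_after (T : Type) (P : T -> bool) (cur : seq T) (w : seq T) : seq (seq T) :=
  match w with
  | [::] => if cur is [::] then [::] else [:: cur]
  | x :: w' => if P x then rcons cur x :: cut_after P [::] w'
               else cut_after P (rcons cur x) w'
  end.

Definition insertion_assemblee (n r : nat) (f : nat -> nat) (p : seq bool) : assemblee :=
  [seq [seq ivalue n r f it | it <- B] | B <- cut_after is_green [::] (merge_word p 1 1)].

Definition trunc_subexc (n r : nat) (f : nat -> nat) : Prop :=
  forall i, 1 <= i <= n - r -> 0 < f i <= i + r + 1.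

Definition w_alpha (n r : nat) (f : nat -> nat) : nat :=
  count (fun i => f i == i + r + 1) (iota 1 (n - r)).
Definition w_beta (n r : nat) (f : nat -> nat) : nat :=
  count (fun i => f i == 1) (iota 1 (n - r)).

(* Main.v *)
Require Import Defs.
From mathcomp Require Import all_boot zify.
Set Implicit Arguments. Unset Strict Implicit. Unset Printing Implicit Defensive.


Lemma flatten_cut (T : Type) (P : T -> bool) cur w :
  flatten (cut_after P cur w) = cur ++ w.
Proof.
elim: w cur => [|x w IH] cur /=; first by case: cur => //= ? ?; rewrite cats0.
case: (P x) => /=; rewrite ?IH cat_rcons //.
Qed.

Definition cut_ok (T : Type) (P : T -> bool) (x0 : T) (cur w : seq T) :=
  if w is [::] then nilp cur else P (last x0 w).

Lemma cut_blocks (T : Type) (P : T -> bool) x0 cur w :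
  cut_ok P x0 cur w ->
  all (fun B => if B is y :: B' then P (last y B') else false) (cut_after P cur w).
Proof.
elim: w cur => [|x w IH] cur /=; first by case: cur.
case Px: (P x) => /= H.
  rewrite IH; last by case: w H IH.
  by case: cur => [|? ?] /=; rewrite ?last_rcons Px.
apply: IH; case: w H => [|y w] /= H; [by rewrite Px in H | done].
Qed.

Lemma cut_ends (T : Type) (P : T -> bool) x0 d cur w :
  cut_ok P x0 cur w ->
  [seq (if B is y :: B' then last y B' else d) | B <- cut_after P cur w] = filter P w.
Proof.
elim: w cur => [|x w IH] cur /=; first by case: cur.
case Px: (P x) => /= H.
  rewrite IH; last by case: w H IH.
  by case: cur => [|? ?] /=; rewrite ?last_rcons.
apply: IH; case: w H => [|y w] /= H; [by rewrite Px in H | done].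
Qed.

Lemma merge_rcons p i k :
  merge_word (rcons p true) i k = rcons (merge_word p i k) (inl (k + count id p)).
Proof.
elim: p i k => [|b p IH] i k /=; first by rewrite addn0.
by case: b; rewrite IH //= addnS addSn.
Qed.

Lemma merge_green p i k :
  filter is_green (merge_word p i k) = [seq inl j | j <- iota k (count id p)] :> seq item.
Proof.
elim: p i k => [|b p IH] i k //=; by case: b => /=; rewrite IH.
Qed.

Lemma merge_red p i k :
  filter (predC is_green) (merge_word p i k) = [seq inr j | j <- iota i (count negb p)] :> seq item.
Proof.
elim: p i k => [|b p IH] i k //=; by case: b => /=; rewrite IH.
Qed.

Lemma fill_size P s w : size (fill P s w) = size w.
Proof. by elim: w s => //= x w IH s; case: (P x) => /=; rewrite IH. Qed.

Lemma fill_nth P s w i : ~~ P (nth 0 w i) -> nth 0 (fill P s w) i = nth 0 w i.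
Proof.
elim: w s i => [|x w IH] s i /=; first by rewrite nth_nil.
case: i => [|i] /=; first by case: (P x) => //= ->.
by case: (P x) => /= H; rewrite IH.
Qed.

Lemma fill_filterP P s w : all P s -> size s = count P w -> filter P (fill P s w) = s.
Proof.
elim: w s => [|x w IH] s /=; first by case: s.
case Px: (P x) => /=.
  case: s => //= y s /andP [Py Ps] [E]; by rewrite Py IH.
by move=> Ps E; rewrite Px IH.
Qed.

Lemma fill_filterQ P (Q : pred nat) s w : all P s -> size s = count P w ->
  (forall x, Q x -> ~~ P x) -> filter Q (fill P s w) = filter Q w.
Proof.
move=> + + QP; elim: w s => [|x w IH] s /=; first by case: s.
case Px: (P x) => /=.
  case: s => //= y s /andP [Py Ps] [E].
  have -> : Q y = false by apply/negP => /QP; rewrite Py.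
  have -> : Q x = false by apply/negP => /QP; rewrite Px.
  by rewrite IH.
by move=> Ps E; case: (Q x); rewrite IH.
Qed.

Fixpoint LMP (R : nat -> nat -> bool) (pre u : seq nat) : nat :=
  if u is x :: u' then all (R x) pre + LMP R (rcons pre x) u' else 0.
Fixpoint RMF (F : nat -> seq nat -> bool) (u : seq nat) : nat :=
  if u is x :: u' then F x u' + RMF F u' else 0.
Fixpoint LMF (F : nat -> seq nat -> bool) (pre u : seq nat) : nat :=
  if u is x :: u' then F x pre + LMF F (rcons pre x) u' else 0.

Lemma count_RMF F w :
  count (fun i => F (nth 0 w i) (drop i.+1 w)) (iota 0 (size w)) = RMF F w.
Proof.
elim: w => //= x w IH; rewrite drop0 -IH; congr (_ + _).
by rewrite -(addn0 1) iotaDl count_map.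
Qed.

Lemma count_LMF F w pre :
  count (fun i => F (nth 0 w i) (pre ++ take i w)) (iota 0 (size w)) = LMF F pre w.
Proof.
elim: w pre => /= [|x w IH] pre; first by [].
rewrite cats0 -IH; congr (_ + _).
rewrite -(addn0 1) iotaDl count_map; apply: eq_count => i /=.
by rewrite /= cat_rcons.
Qed.

Lemma RMF_filter (Q : pred nat) w :
  RMF (fun x u => Q x && all (fun y => Q y ==> (y < x)) u) w =
  RMF (fun x u => all (fun y => y < x) u) (filter Q w).
Proof.
elim: w => //= x w ->; case: (Q x) => //=; congr (_ + _).
by rewrite all_filter.
Qed.

Lemma LMF_filter (Q : pred nat) (R : nat -> nat -> bool) w pre :
  LMF (fun x u => Q x && all (fun y => Q y ==> R x y) u) pre w =
  LMP R (filter Q pre) (filter Q w).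
Proof.
elim: w pre => //= x w IH pre; rewrite IH filter_rcons.
by case: (Q x) => //=; rewrite all_filter.
Qed.

Lemma LMP_rcons R pre u x :
  LMP R pre (rcons u x) = LMP R pre u + all (R x) (pre ++ u).
Proof.
elim: u pre => /= [|y u IH] pre; first by rewrite cats0 addn0.
by rewrite IH cat_rcons addnA.
Qed.

Lemma RM_rev u t :
  RMF (fun x u => all (fun y => y < x) u) (rev u ++ t) =
  LMP (fun x y => y < x) (rev t) u + RMF (fun x u => all (fun y => y < x) u) t.
Proof.
elim: u t => //= x u IH t.
rewrite rev_cons cat_rcons IH /= rev_cons all_rev addnA; congr (_ + _).
by rewrite addnC.
Qed.

Lemma all_map_R (D : pred nat) (R1 R2 : nat -> nat -> bool) (g : nat -> nat) x pre :
  D x -> all D pre -> {in D &, forall x y, R1 (g x) (g y) = R2 x y} ->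
  all (R1 (g x)) (map g pre) = all (R2 x) pre.
Proof.
move=> Dx + HR; elim: pre => //= y pre IHp /andP [Dy Dp].
by rewrite HR // IHp.
Qed.

Lemma LMP_map (D : pred nat) R1 R2 g pre u :
  all D pre -> all D u -> {in D &, forall x y, R1 (g x) (g y) = R2 x y} ->
  LMP R1 (map g pre) (map g u) = LMP R2 pre u.
Proof.
move=> + + HR; elim: u pre => //= x u IH pre Dp /andP [Dx Du].
rewrite -map_rcons IH ?all_rcons ?Dx //.
by rewrite (all_map_R Dx Dp HR).
Qed.

Definition init r : seq item := [seq inl k | k <- rev (iota 1 r.+1)].
Definition hs r (f : nat -> nat) j : seq item :=
  foldl (fun s i => insert_at s (f i).-1 (inr i)) (init r) (iota 1 j).

Lemma height_hs n r f : height_order n r f = hs r f (n - r).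
Proof. by []. Qed.

Lemma hsS r f j : hs r f j.+1 = insert_at (hs r f j) (f j.+1).-1 (inr j.+1).
Proof. by rewrite /hs -[j.+1]addn1 iotaD foldl_cat /= add1n addn1. Qed.

Lemma perm_insert (s : seq item) k z : perm_eq (insert_at s k z) (z :: s).
Proof. by rewrite /insert_at -cat1s perm_catCA cat_take_drop. Qed.

Definition memP r j (x : item) : bool :=
  match x with inl l => 0 < l <= r.+1 | inr i => 0 < i <= j end.

Lemma hs_inv r f j :
  [/\ uniq (hs r f j), size (hs r f j) = j + r.+1 & forall x, (x \in hs r f j) = memP r j x].
Proof.
elim: j => [|j [U S M]].
  split.
  - by rewrite /hs /= map_inj_uniq ?rev_uniq ?iota_uniq //; move=> ? ? [].
  - by rewrite /hs /= size_map size_rev size_iota.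
  - case=> [l|i]; rewrite /hs /memP /init.
      rewrite mem_map; last by move=> ? ? [].
      by rewrite mem_rev mem_iota; lia.
    have -> : (0 < i <= 0) = false by lia.
    by apply/mapP => -[].
have Hp := perm_insert (hs r f j) (f j.+1).-1 (inr j.+1).
have nin : inr j.+1 \notin hs r f j by rewrite M /=; lia.
rewrite hsS; split.
- by rewrite (perm_uniq Hp) /= nin U.
- by rewrite (perm_size Hp) /= S.
- move=> x; rewrite (perm_mem Hp) in_cons M.
  case: x => [l|i] /=; first done.
  case: eqP => [[->]|ne] /=; first by rewrite ltnSn.
  have ne' : (i : nat) <> j.+1 by move=> E; apply: ne; rewrite E.
  rewrite [i <= j.+1]leq_eqVlt ltnS; case: eqP => // E; by case: ne'.
Qed.

Lemma index_insert (s : seq item) k z x :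
  k <= size s -> x != z -> index x (insert_at s k z) = index x s + (k <= index x s).
Proof.
move=> ks xz; rewrite /insert_at index_cat.
have -> : index x s = index x (take k s ++ drop k s) by rewrite cat_take_drop.
rewrite index_cat size_take.
have -> : (if k < size s then k else size s) = k by case: ltnP => //; lia.
case: ifP => xin.
  have : index x (take k s) < k.
    by rewrite -{2}(size_takel ks) index_mem.
  lia.
by rewrite /= eq_sym (negbTE xz); lia.
Qed.

Lemma index_insert_new (s : seq item) k z :
  k <= size s -> z \notin s -> index z (insert_at s k z) = k.
Proof.
move=> ks zs; rewrite /insert_at index_cat.
have -> : (z \in take k s) = false.
  by apply/negP => /mem_take; rewrite (negbTE zs).
by rewrite /= eqxx size_takel // addn0.
Qed.

Lemma mono_lt a b k : (a + (k <= a) < b + (k <= b)) = (a < b).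
Proof. by case: (leqP k a); case: (leqP k b); lia. Qed.

Lemma memP_mono r j j' x : j <= j' -> memP r j x -> memP r j' x.
Proof. by case: x => [l|i] /=; lia. Qed.

Lemma hs_pres r f j d x y :
  (forall i, j < i <= j + d -> (f i).-1 <= i + r) ->
  x \in hs r f j -> y \in hs r f j ->
  (index x (hs r f (j + d)) < index y (hs r f (j + d))) =
  (index x (hs r f j) < index y (hs r f j)).
Proof.
move=> Hf xin yin; elim: d Hf => [|d IH] Hf; first by rewrite addn0.
have [_ S M] := hs_inv r f (j + d).
have [_ _ M0] := hs_inv r f j.
rewrite addnS hsS.
have ks : (f (j + d).+1).-1 <= size (hs r f (j + d)).
  by rewrite S; have := Hf (j + d).+1; lia.
have nz : forall u, u \in hs r f j -> u != inr (j + d).+1.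
  move=> u; rewrite M0; case: u => [l|i] //= H; apply/eqP => -[E]; lia.
rewrite !index_insert ?nz // mono_lt IH // => i Hi; apply: Hf; lia.
Qed.

Lemma index_init r l : 0 < l <= r.+1 -> index (inl l) (init r) = r.+1 - l.
Proof.
move=> Hl; rewrite /init index_map; last by move=> ? ? [].
have Hlt : r.+1 - l < size (rev (iota 1 r.+1)) by rewrite size_rev size_iota; lia.
have El : nth 0 (rev (iota 1 r.+1)) (r.+1 - l) = l.
  rewrite nth_rev; last by rewrite size_iota; lia.
  rewrite size_iota nth_iota; lia.
rewrite -{1}El index_uniq //.
by rewrite rev_uniq iota_uniq.
Qed.

Lemma green_order r f j l l' :
  (forall i, 0 < i <= j -> (f i).-1 <= i + r) ->
  0 < l -> l < l' -> l' <= r.+1 ->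
  index (inl l') (hs r f j) < index (inl l) (hs r f j).
Proof.
move=> Hf l0 ll l'r.
have [_ _ M0] := hs_inv r f 0.
have := @hs_pres r f 0 j (inl l') (inl l).
rewrite add0n => ->; first by rewrite /hs /= !index_init; lia.
- by move=> i Hi; apply: Hf; lia.
- by rewrite M0 /=; lia.
- by rewrite M0 /=; lia.
Qed.

Lemma step_setup r f m j :
  (forall i, 0 < i <= m -> 0 < f i <= i + r + 1) -> j < m ->
  let v := fun it => (index it (hs r f m)).+1 in
  let s := hs r f j in let k := (f j.+1).-1 in
  let s' := hs r f j.+1 in
  [/\ k <= size s, size s = j + r.+1, uniq s, (forall a, (a \in s) = memP r j a) &
    [/\ (forall a b, memP r j.+1 a -> memP r j.+1 b -> (v a < v b) = (index a s' < index b s')),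
      index (inr j.+1) s' = k &
      (forall y, y \in s -> index y s' = index y s + (k <= index y s))]].
Proof.
move=> Hf jm v s k s'.
have [U S M] := hs_inv r f j.
have [_ _ M'] := hs_inv r f j.+1.
have ks : k <= size s by rewrite S /k; have := Hf j.+1; lia.
have nin : inr j.+1 \notin s by rewrite M /=; lia.
split => //; split.
- move=> a b am bm; rewrite /v ltnS.
  have -> : m = j.+1 + (m - j.+1) by lia.
  rewrite hs_pres ?M' // => i Hi; have := Hf i; lia.
- by rewrite /s' hsS index_insert_new.
- move=> y yin; rewrite /s' hsS index_insert //.
  by apply/eqP => E; move: nin; rewrite -E yin.
Qed.

Lemma aux_lt a k : a < k -> a + (k <= a) < k.
Proof. by move=> H; rewrite [k <= a]leqNgt H addn0. Qed.

Lemma up_step r f m j :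
  (forall i, 0 < i <= m -> 0 < f i <= i + r + 1) -> j < m ->
  let v := fun it => (index it (hs r f m)).+1 in
  ((v (inl 1) < v (inr j.+1)) &&
   all (fun y => v y < v (inr j.+1)) [seq y <- map inr (iota 1 j) | v (inl 1) < v y])
  = (f j.+1 == j.+1 + r + 1).
Proof.
move=> Hf jm v.
have [ks S U M [Conv Iz Iy]] := step_setup Hf jm.
set s := hs r f j in ks S U M Iy; set k := (f j.+1).-1 in ks Iz Iy.
set s' := hs r f j.+1 in Conv Iz Iy.
have GO : forall l, 1 < l <= r.+1 -> index (inl l) s' < index (inl 1) s'.
  move=> l Hl; apply: green_order => //; try lia; move=> i Hi; have := Hf i; lia.
have mi : forall y, y \in map inr (iota 1 j) -> memP r j.+1 y /\ y \in s.
  move=> y /mapP [i]; rewrite mem_iota => Hi ->; rewrite M /=; split; lia.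
have mg : memP r j.+1 (inl 1) by rewrite /=; lia.
have mz : memP r j.+1 (inr j.+1) by rewrite /=; lia.
rewrite Conv // Iz.
rewrite (@eq_in_filter _ _ (fun y => index (inl 1) s' < index y s')); last first.
  by move=> y /mi [my _]; rewrite Conv.
rewrite (@eq_in_all _ _ (fun y => index y s' < k)); last first.
  by move=> y; rewrite mem_filter => /andP [_ /mi [my _]]; rewrite Conv // Iz.
have g1s : inl 1 \in s by rewrite M /=; lia.
have Hfk := Hf j.+1.
case: (ltnP k (size s)) => kS.
- have -> : (f j.+1 == j.+1 + r + 1) = false by apply/negbTE; rewrite /k in kS; lia.
  apply/negbTE/negP => /andP [H1 H2].
  set y := nth (inl 0) s k.
  have yin : y \in s by apply: mem_nth.
  have iy : index y s = k by apply: index_uniq.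
  have iy' : index y s' = k.+1 by rewrite Iy // iy leqnn addn1.
  move: (yin); rewrite M; case Ey: y => [l|i] /= Hm.
  + case: (ltnP 1 l) => l1.
      have := GO l; rewrite -Ey iy'; lia.
    have El : l = 1 by lia.
    move: H1; rewrite -El -Ey iy'; lia.
  + have : y \in [seq y <- [seq inr i | i <- iota 1 j] | index (inl 1) s' < index y s'].
      rewrite mem_filter iy' (ltn_trans H1) //= Ey; apply: map_f; rewrite mem_iota; lia.
    by move=> /(allP H2); rewrite iy'; lia.
- have -> : (f j.+1 == j.+1 + r + 1) by rewrite /k in kS; lia.
  apply/andP; split.
    rewrite Iy //; have := index_mem (inl 1) s; rewrite g1s => H.
    have Ek : k = size s by apply/eqP; rewrite eqn_leq ks kS.
    by apply: aux_lt; rewrite Ek; exact: H.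
  apply/allP => y; rewrite mem_filter => /andP [_ /mi [_ ys]].
  rewrite Iy //; have := index_mem y s; rewrite ys => H.
  have Ek : k = size s by apply/eqP; rewrite eqn_leq ks kS.
  by apply: aux_lt; rewrite Ek; exact: H.
Qed.

Lemma low_step r f m j :
  (forall i, 0 < i <= m -> 0 < f i <= i + r + 1) -> j < m ->
  let v := fun it => (index it (hs r f m)).+1 in
  ((v (inr j.+1) < v (inl r.+1)) &&
   all (fun y => v (inr j.+1) < v y) [seq y <- map inr (iota 1 j) | v y < v (inl r.+1)])
  = (f j.+1 == 1).
Proof.
move=> Hf jm v.
have [ks S U M [Conv Iz Iy]] := step_setup Hf jm.
set s := hs r f j in ks S U M Iy; set k := (f j.+1).-1 in ks Iz Iy.
set s' := hs r f j.+1 in Conv Iz Iy.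
have GO : forall l, 0 < l < r.+1 -> index (inl r.+1) s' < index (inl l) s'.
  move=> l Hl; apply: green_order => //; try lia; move=> i Hi; have := Hf i; lia.
have mi : forall y, y \in map inr (iota 1 j) -> memP r j.+1 y /\ y \in s.
  move=> y /mapP [i]; rewrite mem_iota => Hi ->; rewrite M /=; split; lia.
have mg : memP r j.+1 (inl r.+1) by rewrite /=; lia.
have mz : memP r j.+1 (inr j.+1) by rewrite /=; lia.
rewrite Conv // Iz.
rewrite (@eq_in_filter _ _ (fun y => index y s' < index (inl r.+1) s')); last first.
  by move=> y /mi [my _]; rewrite Conv.
rewrite (@eq_in_all _ _ (fun y => k < index y s')); last first.
  by move=> y; rewrite mem_filter => /andP [_ /mi [my _]]; rewrite Conv // Iz.
have grs : inl r.+1 \in s by rewrite M /=; lia.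
have Hfk := Hf j.+1.
case: (posnP k) => k0.
- have -> : (f j.+1 == 1) by rewrite /k in k0; lia.
  apply/andP; split; first by rewrite Iy // k0 addn1.
  apply/allP => y; rewrite mem_filter => /andP [_ /mi [_ ys]].
  by rewrite Iy // k0 addn1.
- have -> : (f j.+1 == 1) = false by apply/negbTE; rewrite /k in k0; lia.
  apply/negbTE/negP => /andP [H1 H2].
  set y := nth (inl 0) s k.-1.
  have kS : k.-1 < size s by rewrite prednK.
  have yin : y \in s by apply: mem_nth.
  have iy : index y s = k.-1 by apply: index_uniq.
  have iy' : index y s' = k.-1.
    rewrite Iy // iy; have -> : (k <= k.-1) = false by lia.
    by rewrite addn0.
  move: (yin); rewrite M; case Ey: y => [l|i] /= Hm.
  + case: (ltnP l r.+1) => l1.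
      have := GO l; rewrite -Ey iy'; lia.
    have El : l = r.+1 by lia.
    move: H1; rewrite -El -Ey iy'; lia.
  + have : y \in [seq y <- [seq inr i | i <- iota 1 j] | index y s' < index (inl r.+1) s'].
      rewrite mem_filter iy'; apply/andP; split; first lia.
      rewrite Ey; apply: map_f; rewrite mem_iota; lia.
    by move=> /(allP H2); rewrite iy'; lia.
Qed.

Definition vv r f m (it : item) := (index it (hs r f m)).+1.

Lemma iotaSr1 j : iota 1 j.+1 = rcons (iota 1 j) j.+1.
Proof. by rewrite -[j.+1]addn1 iotaD cats1 add1n addn1. Qed.

Lemma up_count r f m j :
  (forall i, 0 < i <= m -> 0 < f i <= i + r + 1) -> j <= m ->
  LMP (fun x y => y < x) [::]
      (map (vv r f m) [seq y <- map inr (iota 1 j) | vv r f m (inl 1) < vv r f m y])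
  = count (fun i => f i == i + r + 1) (iota 1 j).
Proof.
move=> Hf; elim: j => [|j IH] jm //.
have jm' : j < m by lia.
have E : (vv r f m (inl 1) < vv r f m (inr j.+1)) &&
   all (fun y => vv r f m y < vv r f m (inr j.+1))
     [seq y <- map inr (iota 1 j) | vv r f m (inl 1) < vv r f m y]
  = (f j.+1 == j.+1 + r + 1) := up_step Hf jm'.
rewrite iotaSr1 -[X in _ = count _ X]cats1 count_cat /= addn0 map_rcons filter_rcons -IH; last lia.
case U: (vv r f m (inl 1) < vv r f m (inr j.+1)); rewrite U /= in E.
  by rewrite map_rcons LMP_rcons /= all_map -E.
by rewrite -E addn0.
Qed.

Lemma low_count r f m j :
  (forall i, 0 < i <= m -> 0 < f i <= i + r + 1) -> j <= m ->
  LMP (fun x y => x < y) [::]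
      (map (vv r f m) [seq y <- map inr (iota 1 j) | vv r f m y < vv r f m (inl r.+1)])
  = count (fun i => f i == 1) (iota 1 j).
Proof.
move=> Hf; elim: j => [|j IH] jm //.
have jm' : j < m by lia.
have E : (vv r f m (inr j.+1) < vv r f m (inl r.+1)) &&
   all (fun y => vv r f m (inr j.+1) < vv r f m y)
     [seq y <- map inr (iota 1 j) | vv r f m y < vv r f m (inl r.+1)]
  = (f j.+1 == 1) := low_step Hf jm'.
rewrite iotaSr1 -[X in _ = count _ X]cats1 count_cat /= addn0 map_rcons filter_rcons -IH; last lia.
case U: (vv r f m (inr j.+1) < vv r f m (inl r.+1)); rewrite U /= in E.
  by rewrite map_rcons LMP_rcons /= all_map -E.
by rewrite -E addn0.
Qed.

Lemma foldr_max_le (s : seq nat) c : all (fun x => x <= c) s -> foldr maxn 0 s <= c.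
Proof. elim: s => //= y s IHs /andP [yc sc]; have := IHs sc; lia. Qed.

Lemma foldr_min_ge (s : seq nat) c c0 : c <= c0 -> all (fun x => c <= x) s -> c <= foldr minn c0 s.
Proof. move=> cc0; elim: s => //= y s IHs /andP [yc sc]; have := IHs sc; lia. Qed.

Lemma foldr_max_eq (s : seq nat) c : c \in s -> all (fun x => x <= c) s -> foldr maxn 0 s = c.
Proof.
elim: s => //= x s IH; rewrite in_cons => /orP [/eqP Ec|cin] /andP [xc sc].
  have := foldr_max_le sc; lia.
rewrite IH //; lia.
Qed.

Lemma foldr_min_eq (s : seq nat) c c0 : c \in s -> c <= c0 -> all (fun x => c <= x) s -> foldr minn c0 s = c.
Proof.
move=> + cc0; elim: s => //= x s IH; rewrite in_cons => /orP [/eqP Ec|cin] /andP [xc sc].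
  have := foldr_min_ge cc0 sc; lia.
rewrite IH //; lia.
Qed.

Lemma last_take_nth (s : seq nat) k : 0 < k <= size s -> last 0 (take k s) = nth 0 s k.-1.
Proof.
move=> Hk; rewrite (last_nth 0) size_takel; last lia.
case: k Hk => [|k] Hk //=; rewrite nth_take //.
Qed.

Lemma ends_reshape (Q : pred nat) sh s t :
  size t = size s -> sumn sh = size s -> all (fun k => 0 < k) sh ->
  (forall i, i < size s -> Q (nth 0 s i) -> nth 0 t i = nth 0 s i) ->
  all Q (block_ends (reshape sh s)) ->
  block_ends (reshape sh t) = block_ends (reshape sh s).
Proof.
elim: sh s t => //= k sh IH s t St Ss /andP [k0 sh0] Hn /andP [Qk Qr].
have ks : k <= size s by lia.
rewrite !last_take_nth ?St //; last lia.
rewrite last_take_nth // in Qk.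
rewrite Hn //; last lia.
congr (_ :: _); apply: IH => //.
- by rewrite !size_drop St.
- by rewrite size_drop; lia.
- move=> i; rewrite size_drop !nth_drop => Hi Hq; apply: Hn => //; lia.
all: by rewrite k0 ks.
Qed.

Lemma fill_all (D : pred nat) P s w : all D s -> all D w -> size s = count P w -> all D (fill P s w).
Proof.
elim: w s => [|x w IH] s //= Ds /andP [Dx Dw].
case: (P x) => /=.
  case: s Ds => //= y s /andP [Dy Ds] [E]; rewrite Dy; exact: IH.
by move=> E; rewrite Dx IH.
Qed.

Theorem mainTheorem2 (n r : nat) (f : nat -> nat) (p : seq bool) :
  r <= n -> trunc_subexc n r f -> admissible n r p ->
  size (lrs (rho (insertion_assemblee n r f p))) = w_alpha n r f /\
  size (rls (rho (insertion_assemblee n r f p))) = w_beta n r f.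
Proof.
move=> rn Hf /and3P [/eqP Sp /eqP Cp Lp].
set m := n - r.
have Hf' : forall i, 0 < i <= m -> 0 < f i <= i + r + 1 by move=> i /Hf.
set v := vv r f m.
have vE : ivalue n r f =1 v by [].
set W := merge_word p 1 1.
set C := cut_after is_green [::] W.
set A := map (map v) C.
have AE : insertion_assemblee n r f p = A by [].
have [p' pE] : exists p', p = rcons p' true.
  case/lastP: p Sp Cp Lp {AE A C W} => [|q b] //; rewrite last_rcons => _ _ ->; by exists q.
have Cn : count negb p = m.
  have -> : count negb p = count (predC id) p by apply: eq_count.
  have := count_predC id p; rewrite Sp Cp /m; lia.
have Wok : cut_ok is_green (inl 0) [::] W.
  rewrite /W pE merge_rcons /cut_ok.
  case E: (rcons _ _) => [|y w]; first by case: (merge_word p' 1 1) E.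
  by rewrite -E last_rcons.
have WG : filter is_green W = map inl (iota 1 r.+1) by rewrite merge_green Cp.
have WR : filter (predC is_green) W = map inr (iota 1 m) by rewrite merge_red Cn.
have wE : aword A = map v W by rewrite /aword -map_flatten flatten_cut.
have GO : forall l l', 0 < l -> l < l' -> l' <= r.+1 -> v (inl l') < v (inl l).
  move=> l l' l0 ll lr; rewrite /v /vv ltnS; apply: green_order => // i Hi.
  have := Hf' i; lia.
have GB : forall l, 0 < l <= r.+1 -> v (inl r.+1) <= v (inl l) <= v (inl 1).
  move=> l Hl; apply/andP; split.
    case: (ltnP l r.+1) => H; [ by apply: ltnW; apply: GO; lia | by have -> : l = r.+1 by lia].
  case: (ltnP 1 l) => H; [ by apply: ltnW; apply: GO; lia | by have -> : l = 1 by lia].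
have BE : block_ends A = map v (map inl (iota 1 r.+1)).
  rewrite -WG -(cut_ends (inl 0) Wok) /block_ends -!map_comp.
  apply/eq_in_map => B /=.
  move/allP: (cut_blocks Wok) => H /H.
  by case: B => // y B _ /=; rewrite last_map.
set b1 := v (inl 1); set br := v (inl r.+1).
have brb1 : br <= b1 by have := GB 1; rewrite /=; lia.
have QB : all (fun x => br <= x <= b1) (block_ends A).
  rewrite BE; apply/allP => x /mapP [it /mapP [l]]; rewrite mem_iota => Hl -> ->.
  apply: GB; lia.
have bfE : bfirst A = b1.
  rewrite /bfirst BE; apply: foldr_max_eq.
    by apply: map_f; apply: map_f; rewrite mem_iota; lia.
  by move: QB; rewrite BE => /allP H; apply/allP => x /H /andP [].
have blE : blast A = br.
  rewrite /blast bfE BE; apply: foldr_min_eq => //.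
    by apply: map_f; apply: map_f; rewrite mem_iota; lia.
  by move: QB; rewrite BE => /allP H; apply/allP => x /H /andP [].
set w := map v W.
set w' := rho_word w b1 br.
have rhoE : rho A = reshape (shape A) w' by rewrite /rho bfE blE wE.
have Sw' : size w' = size w by rewrite /w' /rho_word size_map fill_size.
have shA : sumn (shape A) = size w by rewrite -size_flatten -/(aword A) wE.
have aw' : aword (rho A) = w' by rewrite rhoE /aword reshapeKr // Sw' shA.
have be' : block_ends (rho A) = block_ends A.
  rewrite rhoE -{2}(flattenK A) -/(aword A) wE.
  apply: (@ends_reshape (fun x => br <= x <= b1)) => //.
  - have -> : shape A = map size C.
      by rewrite /shape /A -map_comp; apply/eq_map => B /=; rewrite size_map.
    apply/allP => x /mapP [B BC ->].
    by move/allP: (cut_blocks Wok) => /(_ B BC); case: B {BC}.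
  - move=> i Hi /andP [Hbr Hb1]; rewrite /w' /rho_word (nth_map 0); last by rewrite fill_size.
    rewrite fill_nth; last by rewrite -leqNgt.
    by rewrite ltnNge Hbr.
  - by rewrite -wE /aword flattenK.
have bf' : bfirst (rho A) = b1 by rewrite /bfirst be' -/(bfirst A) bfE.
have bl' : blast (rho A) = br by rewrite /blast bf' be' -bfE; exact: blE.
have pos : all (fun x => 0 < x) w by rewrite /w all_map; apply/allP.
set a := filter (fun x => b1 < x) w.
have Fu : size (rev a) = count (fun x => b1 < x) w by rewrite size_rev size_filter.
have Fa : all (fun x => b1 < x) (rev a) by rewrite all_rev filter_all.
have F1 : filter (fun x => b1 < x) w' = rev a.
  rewrite /w' /rho_word -/a filter_map.
  rewrite (@eq_filter _ _ (fun x => b1 < x)); last by move=> x /=; case: ifP => //; lia.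
  rewrite fill_filterP //; apply: map_id_in => x; rewrite mem_rev mem_filter => /andP [xb _].
  by case: ifP => //; lia.
rewrite AE; split.
- rewrite /lrs aw' bf' size_map size_filter.
  rewrite (count_RMF (fun x u => (b1 < x) && all (fun y => (b1 < y) ==> (y < x)) u)).
  rewrite (RMF_filter (fun x => b1 < x)) F1 -[rev a]cats0 RM_rev /= addn0.
  rewrite /a /w filter_map.
  have F2 : filter (preim v (fun x => b1 < x)) W = filter (fun it => b1 < v it) (map inr (iota 1 m)).
    rewrite -WR -filter_predI; apply: eq_in_filter => it itW /=.
    case: it itW => [l|i] itW /=; last by rewrite andbT.
    have : inl l \in filter is_green W by rewrite mem_filter itW.
    rewrite WG => /mapP [l']; rewrite mem_iota => Hl [El]; rewrite andbF El.
    by have := GB l'; rewrite /b1; lia.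
  by rewrite F2 up_count.
rewrite /rls aw' bl' size_map size_filter.
rewrite (count_LMF (fun x u => (x < br) && all (fun y => (y < br) ==> (y < x)) u) w' [::]).
rewrite (LMF_filter (fun x => x < br) (fun x y => y < x)) /=.
have F3 : filter (fun x => x < br) w' = map (fun x => br - x) (filter (fun x => x < br) w).
  rewrite /w' /rho_word -/a filter_map.
  set u := fill _ (rev a) w.
  have posu : all (fun x => 0 < x) u.
    apply: fill_all => //; apply/allP => x; rewrite mem_rev mem_filter => /andP [_ xw].
    exact: (allP pos x xw).
  rewrite (@eq_in_filter _ _ (fun x => x < br)); last first.
    by move=> x /(allP posu) x0 /=; case: ifP; lia.
  rewrite /u (@fill_filterQ _ (fun x => x < br)) //; last by move=> x /=; lia.
  by apply/eq_in_map => x; rewrite mem_filter => /andP [xb _] /=; rewrite xb.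
rewrite F3.
have := @LMP_map (fun x => 0 < x < br) (fun x y => y < x) (fun x y => x < y) (fun x => br - x)
  [::] (filter (fun x => x < br) w).
rewrite /= => ->; first last.
- by move=> x y /andP [x0 xb] /andP [y0 yb]; lia.
- by apply/allP => x; rewrite mem_filter => /andP [xb xw]; rewrite xb (allP pos x xw).
- by [].
rewrite /w filter_map.
have F4 : filter (preim v (fun x => x < br)) W = filter (fun it => v it < br) (map inr (iota 1 m)).
  rewrite -WR -filter_predI; apply: eq_in_filter => it itW /=.
  case: it itW => [l|i] itW /=; last by rewrite andbT.
  have : inl l \in filter is_green W by rewrite mem_filter itW.
  rewrite WG => /mapP [l']; rewrite mem_iota => Hl [El]; rewrite andbF El.
  by have := GB l'; rewrite /br; lia.
by rewrite F4 low_count.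
Qed.
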